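(* Let $n\ge 3$ and let $p(q)=q^n+a_{n-2}q^{n-2}+\dots+a_1q+a_0$ with $a_0,\dots,a_{n-2}\in\mathbb{H}$ and $a_{n-2}\neq 0$. Put $\lambda=\big(\max_{0\le j\le n-2}|a_j|\big)^{1/n}$. Then every zero $q\in\mathbb{H}$ of $p$ satisfies $$|q|\le \lambda+\lambda^2+\lambda^3+\dots+\lambda^{n-1}.$$
   Context: $\mathbb{H}$ denotes the real quaternions with the Euclidean norm $|q|=\sqrt{q\bar q}$. The polynomial $p$ has coefficients written to the left of the powers and is evaluated at $q\in\mathbb{H}$ by direct substitution; a zero of $p$ is a $q\in\mathbb{H}$ with $p(q)=0$. *)

(* Defs.v *)
From Stdlib Require Import Reals List.
Open Scope R_scope.

Record quat : Type := Quat { qr : R; qi : R; qj : R; qk : R }.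

Definition qzero : quat := Quat 0 0 0 0.
Definition qone : quat := Quat 1 0 0 0.

Definition qadd (p q : quat) : quat :=
  Quat (qr p + qr q) (qi p + qi q) (qj p + qj q) (qk p + qk q).

(* Hamilton product, i^2 = j^2 = k^2 = ijk = -1 *)
Definition qmul (p q : quat) : quat :=
  Quat (qr p * qr q - qi p * qi q - qj p * qj q - qk p * qk q)
       (qr p * qi q + qi p * qr q + qj p * qk q - qk p * qj q)
       (qr p * qj q - qi p * qk q + qj p * qr q + qk p * qi q)
       (qr p * qk q + qi p * qj q - qj p * qi q + qk p * qr q).

Definition qnorm (q : quat) : R :=
  sqrt (qr q ^ 2 + qi q ^ 2 + qj q ^ 2 + qk q ^ 2).

Fixpoint qpow (q : quat) (k : nat) : quat :=
  match k with
  | O => qone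
  | S k' => qmul q (qpow q k')
  end.

(* p(q) = q^n + sum_{j=0}^{n-2} a_j q^j, coefficients on the left *)
Definition peval (n : nat) (a : nat -> quat) (q : quat) : quat :=
  qadd (qpow q n)
       (fold_right qadd qzero (map (fun j => qmul (a j) (qpow q j)) (seq 0 (n - 1)))).

Definition maxcoef (n : nat) (a : nat -> quat) : R :=
  fold_right Rmax 0 (map (fun j => qnorm (a j)) (seq 0 (n - 1))).

(* Main.v *)
Require Import Defs.
From Stdlib Require Import Reals List Lra Lia.
Open Scope R_scope.

Definition N4 (q : quat) : R := qr q ^ 2 + qi q ^ 2 + qj q ^ 2 + qk q ^ 2.

Lemma N4_nonneg q : 0 <= N4 q.
Proof. unfold N4. nra. Qed.

Lemma qnorm_nonneg q : 0 <= qnorm q.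
Proof. apply sqrt_pos. Qed.

Lemma qnorm_mul p q : qnorm (qmul p q) = qnorm p * qnorm q.
Proof.
  unfold qnorm. rewrite <- sqrt_mult by (apply (N4_nonneg p) || apply (N4_nonneg q)).
  f_equal. destruct p, q; simpl. ring.
Qed.

Lemma qnorm_one : qnorm qone = 1.
Proof. unfold qnorm, qone; cbn [qr qi qj qk]. replace (1 ^ 2 + 0 ^ 2 + 0 ^ 2 + 0 ^ 2) with 1 by ring. apply sqrt_1. Qed.

Lemma qnorm_zero : qnorm qzero = 0.
Proof. unfold qnorm, qzero; cbn [qr qi qj qk]. replace (0 ^ 2 + 0 ^ 2 + 0 ^ 2 + 0 ^ 2) with 0 by ring. apply sqrt_0. Qed.

Lemma qnorm_pow q k : qnorm (qpow q k) = qnorm q ^ k.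
Proof. induction k; simpl. apply qnorm_one. rewrite qnorm_mul, IHk. ring. Qed.

Lemma qnorm_add p q : qnorm (qadd p q) <= qnorm p + qnorm q.
Proof.
  destruct p as [a b c d], q as [e f g h]. unfold qnorm, qadd; cbn [qr qi qj qk].
  set (A := a ^ 2 + b ^ 2 + c ^ 2 + d ^ 2).
  set (B := e ^ 2 + f ^ 2 + g ^ 2 + h ^ 2).
  set (D := a*e + b*f + c*g + d*h).
  assert (HA : 0 <= A) by (unfold A; nra).
  assert (HB : 0 <= B) by (unfold B; nra).
  assert (HD : D <= sqrt A * sqrt B).
  { destruct (Rle_dec D 0). apply Rle_trans with 0; [lra | apply Rmult_le_pos; apply sqrt_pos].
    rewrite <- sqrt_mult by lra.
    rewrite <- (sqrt_square D) by lra. apply sqrt_le_1_alt.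
    assert (A * B - D * D = (a*f-b*e)^2 + (a*g-c*e)^2 + (a*h-d*e)^2 + (b*g-c*f)^2
      + (b*h-d*f)^2 + (c*h-d*g)^2) by (unfold A, B, D; ring).
    pose proof (pow2_ge_0 (a*f-b*e)); pose proof (pow2_ge_0 (a*g-c*e)); pose proof (pow2_ge_0 (a*h-d*e));
    pose proof (pow2_ge_0 (b*g-c*f)); pose proof (pow2_ge_0 (b*h-d*f)); pose proof (pow2_ge_0 (c*h-d*g)). lra. }
  idtac.
  rewrite <- (sqrt_square (sqrt A + sqrt B)) by (pose proof (sqrt_pos A); pose proof (sqrt_pos B); lra).
  apply sqrt_le_1_alt.
  replace ((sqrt A + sqrt B) * (sqrt A + sqrt B)) with
    (sqrt A * sqrt A + sqrt B * sqrt B + 2 * (sqrt A * sqrt B)) by ring.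
  rewrite !sqrt_sqrt by lra.
  assert ((a + e) ^ 2 + (b + f) ^ 2 + (c + g) ^ 2 + (d + h) ^ 2 = A + B + 2 * D)
    by (unfold A, B, D; ring). lra.
Qed.

Definition rsum {A} (f : A -> R) (l : list A) := fold_right Rplus 0 (map f l).

Lemma qnorm_sum {A} (F : A -> quat) l :
  qnorm (fold_right qadd qzero (map F l)) <= rsum (fun x => qnorm (F x)) l.
Proof.
  induction l; simpl. rewrite qnorm_zero; unfold rsum; simpl; lra.
  unfold rsum in *; simpl. eapply Rle_trans. apply qnorm_add. lra.
Qed.

Lemma rsum_le {A} (f g : A -> R) l : (forall x, In x l -> f x <= g x) -> rsum f l <= rsum g l.
Proof.
  induction l; unfold rsum in *; simpl; intros H. lra.
  assert (f a <= g a) by auto. assert (fold_right Rplus 0 (map f l) <= fold_right Rplus 0 (map g l)) by auto. lra.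
Qed.

Lemma rsum_lt {A} (f g : A -> R) l : l <> nil -> (forall x, In x l -> f x < g x) -> rsum f l < rsum g l.
Proof.
  intros Hl H. destruct l as [|a l]. congruence.
  unfold rsum; simpl. assert (f a < g a) by (apply H; simpl; auto).
  assert (rsum f l <= rsum g l) by (apply rsum_le; intros; apply Rlt_le; apply H; simpl; auto).
  unfold rsum in *. lra.
Qed.

Lemma rsum_scal {A} c (f : A -> R) l : c * rsum f l = rsum (fun x => c * f x) l.
Proof. induction l; unfold rsum in *; simpl. ring. rewrite <- IHl. ring. Qed.

Lemma rsum_nonneg {A} (f : A -> R) l : (forall x, In x l -> 0 <= f x) -> 0 <= rsum f l.
Proof.
  induction l; unfold rsum in *; simpl; intros H. lra.
  assert (0 <= f a) by (apply H; auto).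
  assert (0 <= fold_right Rplus 0 (map f l)) by (apply IHl; intros; apply H; auto). lra.
Qed.

Lemma max_ge (f : nat -> R) l x : In x l -> f x <= fold_right Rmax 0 (map f l).
Proof.
  induction l; simpl. tauto. intros [->|H]. apply Rmax_l.
  eapply Rle_trans. apply IHl; auto. apply Rmax_r.
Qed.

Lemma pow_lt_base x y k : 0 <= x < y -> x ^ S k < y ^ S k.
Proof.
  intros H. induction k. simpl; lra.
  change (x * x ^ S k < y * y ^ S k).
  pose proof (pow_le x (S k) (proj1 H)). nra.
Qed.

Lemma qnorm_pos q : q <> qzero -> 0 < qnorm q.
Proof.
  intros H. unfold qnorm. apply sqrt_lt_R0.
  destruct q as [a b c d]; simpl.
  destruct (Rlt_dec 0 (a ^ 2 + b ^ 2 + c ^ 2 + d ^ 2)) as [|Hn]. auto.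
  exfalso. apply H. unfold qzero.
  assert (a = 0) by nra. assert (b = 0) by nra. assert (c = 0) by nra. assert (d = 0) by nra.
  subst; reflexivity.
Qed.

Lemma qadd_zero_norm p q : qadd p q = qzero -> qnorm p = qnorm q.
Proof.
  destruct p as [a b c d], q as [e f g h]; unfold qadd, qzero; simpl.
  intros Hq; injection Hq; intros. unfold qnorm; simpl. f_equal.
  replace a with (-e) by lra. replace b with (-f) by lra.
  replace c with (-g) by lra. replace d with (-h) by lra. ring.
Qed.

Theorem corollary2 (n : nat) (a : nat -> quat) (q : quat) :
  (3 <= n)%nat ->
  a (n - 2)%nat <> qzero ->
  peval n a q = qzero ->
  let lam := Rpower (maxcoef n a) (/ INR n) in
  qnorm q <= fold_right Rplus 0 (map (fun k => lam ^ k) (seq 1 (n - 1))).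
Proof.
  intros Hn Ha Hp lam.
  set (M := maxcoef n a) in *.
  set (r := qnorm q).
  assert (HM : 0 < M).
  { apply Rlt_le_trans with (qnorm (a (n-2)%nat)). apply qnorm_pos; auto.
    unfold M, maxcoef. apply (max_ge (fun j => qnorm (a j))). apply in_seq. lia. }
  assert (Hlam : 0 < lam) by (unfold lam, Rpower; apply exp_pos).
  assert (HlamM : lam ^ n = M).
  { rewrite <- Rpower_pow by auto. unfold lam. rewrite Rpower_mult.
    rewrite Rinv_l. apply Rpower_1; auto. apply not_0_INR; lia. }
  destruct n as [|m]. lia.
  replace (S m - 1)%nat with m in * by lia.
  assert (Hkey : r ^ S m <= rsum (fun j => M * r ^ j) (seq 0 m)).
  { unfold peval in Hp. replace (S m - 1)%nat with m in Hp by lia.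
    apply qadd_zero_norm in Hp. rewrite qnorm_pow in Hp. fold r in Hp. rewrite Hp.
    eapply Rle_trans. apply qnorm_sum. apply rsum_le. intros j Hj.
    rewrite qnorm_mul, qnorm_pow. fold r. apply Rmult_le_compat_r. apply pow_le, qnorm_nonneg.
    unfold M, maxcoef. replace (S m - 1)%nat with m by lia.
    apply (max_ge (fun j => qnorm (a j))). auto. }
  rewrite <- seq_shift, map_map.
  change (r <= rsum (fun x => lam ^ S x) (seq 0 m)).
  set (T := rsum (fun j => lam ^ j) (seq 0 m)).
  assert (E : rsum (fun x => lam ^ S x) (seq 0 m) = lam * T).
  { unfold T. rewrite rsum_scal. reflexivity. }
  rewrite E.
  assert (HT : 1 <= T).
  { unfold T. destruct m as [|m']. lia. unfold rsum; simpl.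
    assert (0 <= rsum (fun j => lam ^ j) (seq 1 m')) by (apply rsum_nonneg; intros; apply pow_le; lra).
    unfold rsum in H. lra. }
  destruct (Rle_dec r (lam * T)) as [|Hgt]. auto.
  exfalso. apply Rnot_le_lt in Hgt.
  assert (Hr : 0 < r) by nra.
  assert (Hlt : T * rsum (fun j => M * r ^ j) (seq 0 m) < T * r ^ S m).
  { rewrite rsum_scal.
    replace (T * r ^ S m) with (rsum (fun j => lam ^ j * r ^ S m) (seq 0 m)).
    2:{ unfold T. rewrite Rmult_comm, rsum_scal. unfold rsum. f_equal. apply map_ext. intros; ring. }
    apply rsum_lt. destruct m; simpl; [lia|congruence].
    intros j Hj. apply in_seq in Hj.
    set (k := (m - j)%nat).
    assert (Hs : (S m = j + S k)%nat) by (unfold k; lia).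
    rewrite <- HlamM, Hs, !pow_add.
    assert (T * lam ^ S k < r ^ S k).
    { apply Rle_lt_trans with ((lam * T) ^ S k).
      rewrite Rpow_mult_distr. rewrite Rmult_comm. apply Rmult_le_compat_l. apply pow_le; lra.
      simpl. pose proof (pow_R1_Rle T k HT). nra.
      apply pow_lt_base. nra. }
    pose proof (pow_lt lam j Hlam). pose proof (pow_lt r j Hr).
    assert (0 < lam ^ j * r ^ j) by nra. nra. }
  nra.
Qed.
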